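(* Let $V$ be a vector space over $\mathrm{GF}(2)$ of finite dimension at least $3$. Then there exists a trilinear form $g:V^3\to\mathrm{GF}(2)$ such that for every $0\ne x\in V$ the induced bilinear form $g(x,-,-):V^2\to\mathrm{GF}(2)$ is not symmetric. *)

(* Defs.v *)
From HB Require Import structures.
From mathcomp Require Import all_boot all_order all_algebra.
Set Implicit Arguments. Unset Strict Implicit. Unset Printing Implicit Defensive.
Import GRing.Theory.
Local Open Scope ring_scope.

Definition trilinear (R : comNzRingType) (V : lmodType R) (g : V -> V -> V -> R) : Prop :=
  (forall (a : R) (x x' y z : V), g (a *: x + x') y z = a * g x y z + g x' y z) /\
  (forall (a : R) (x y y' z : V), g x (a *: y + y') z = a * g x y z + g x y' z) /\
  (forall (a : R) (x y z z' : V), g x y (a *: z + z') = a * g x y z + g x y z').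

Definition sym_slice (R : comNzRingType) (V : lmodType R) (g : V -> V -> V -> R) (x : V) : Prop :=
  forall y z : V, g x y z = g x z y.

(* Main.v *)
Require Import Defs.
From HB Require Import structures.
From mathcomp Require Import all_boot all_order all_algebra.
Import GRing.Theory.
Local Open Scope ring_scope.

Lemma ordSS_neq n (i : 'I_n) : (3 <= n)%N -> ordS (ordS i) != i.
Proof.
move=> hn; apply/negP => /eqP/(congr1 val) /=.
have hi := ltn_ord i.
case: (ltngtP i.+1 n) => h1.
- rewrite (modn_small h1).
  case: (ltngtP i.+2 n) => h2.
  + by rewrite (modn_small h2) => /eqP; rewrite -addn2 -{2}[nat_of_ord i]addn0 eqn_add2l.
  + by rewrite ltnS leqNgt h1 in h2.
  + rewrite h2 modnn => h0; move: h2; rewrite -h0 => h2.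
    by move: hn; rewrite -h2.
- by move: h1; rewrite ltnNge hi.
- rewrite h1 modnn modn_small ?(leq_trans _ hn) // => h.
  by move: hn; rewrite -h1 -h.
Qed.

Theorem lemma4p4 (V : vectType 'F_2) (hV : (3 <= \dim (fullv : {vspace V}))%N) :
  exists g : V -> V -> V -> 'F_2,
    trilinear g /\ (forall x : V, x != 0 -> ~ sym_slice g x).
Proof.
set n := \dim (fullv : {vspace V}).
pose X := vbasis (fullv : {vspace V}).
pose c (i : 'I_n) (v : V) := coord X i v.
have cl i a (u v : V) : c i (a *: u + v) = a * c i u + c i v.
  by rewrite /c linearP.
exists (fun x y z => \sum_(i < n) c i x * c i y * c (ordS i) z).
split.
  split; [|split] => a x x' y z.
  - rewrite mulr_sumr -big_split /=; apply: eq_bigr => i _.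
    by rewrite cl mulrDl mulrDl !mulrA.
  - rewrite mulr_sumr -big_split /=; apply: eq_bigr => i _.
    rewrite cl mulrDr mulrDl; congr (_ + _).
    by rewrite (mulrCA (c i x) a) !mulrA.
  - rewrite mulr_sumr -big_split /=; apply: eq_bigr => i _.
    rewrite cl mulrDr; congr (_ + _).
    by rewrite (mulrCA _ a) !mulrA.
move=> x xn0 hs; apply/negP: xn0; apply/negPn/eqP.
have fX : free X by apply: basis_free; apply: vbasisP.
have ce (i j : 'I_n) : c i X`_j = (j == i)%:R by exact: coord_free.
have hx i : c i x = 0.
  have := hs X`_i X`_(ordS i).
  rewrite (bigD1 i) // big1; last first.
    by move=> j /negPf hj; rewrite ce eq_sym hj mulr0 mul0r.
  rewrite (bigD1 (ordS i)) // big1; last first.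
    by move=> j /negPf hj; rewrite (ce j) eq_sym hj mulr0 mul0r.
  rewrite !ce !eqxx /= eq_sym (negPf (ordSS_neq _ i hV)) !addr0 !mulr1 mulr0.
  done.
rewrite (coord_vbasis (memvf x)) big1 // => i _.
by have := hx i; rewrite /c => ->; rewrite scale0r.
Qed.
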